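(* Let $\epsilon,\delta\in(0,1)$, let $P\subset\mathbb{R}^d$ with $|P|=n$ be held by a data source, and let $k$ be the number of centers. Consider the following algorithm. The data source computes $\mathbf{S}=(S,\Delta,w)=\pi_2(P)$ using the FSS coreset construction $\pi_2$, then computes $S'=\pi_1(S)$ where $\pi_1:\mathbb{R}^d\to\mathbb{R}^{d'}$ is a JL projection (applied as multiplication by a $d\times d'$ matrix) with $d'=O(\epsilon^{-2}\log(|S|k/\delta))$, and reports $(S',\Delta,w)$ to a server. The server computes $X'$, the optimal $k$-means centers of $S'$ with weights $w$, and returns a set $X\subset\mathbb{R}^d$ with $\pi_1(X)=X'$. Let $X^*$ be optimal $k$-means centers of $P$. Suppose that $\pi_2$ outputs an $\epsilon$-coreset of $P$ with probability at least $1-\delta$, and that with probability at least $1-\delta$, $\mathrm{cost}(\mathbf{S},Y)\approx_{(1+\epsilon)^2}\mathrm{cost}((\pi_1(S),\Delta,w),\pi_1(Y))$ for both $Y=X$ and $Y=X^*$. Assume $\min(n,d)\gg k,1/\epsilon,1/\delta$. Then: (1) $X$ is a $\frac{(1+\epsilon)^5}{1-\epsilon}$-approximation for $k$-means clustering of $P$ with probability at least $(1-\delta)^2$; (2) the communication cost is $\tilde{O}(k^3/\epsilon^6)$; (3) the complexity at the data source is $O(nd\cdot\min(n,d))$.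
   Context: For finite $P,X\subset\mathbb{R}^d$, $\mathrm{cost}(P,X)=\sum_{p\in P}\min_{x\in X}\|p-x\|^2$. A coreset is a triple $\mathbf{S}=(S,\Delta,w)$ with $S$ finite, $w:S\to\mathbb{R}$, $\Delta\in\mathbb{R}$, and $\mathrm{cost}(\mathbf{S},X)=\sum_{q\in S}w(q)\min_{x\in X}\|q-x\|^2+\Delta$; it is an $\epsilon$-coreset of $P$ if $(1-\epsilon)\mathrm{cost}(P,X)\le\mathrm{cost}(\mathbf{S},X)\le(1+\epsilon)\mathrm{cost}(P,X)$ for all $k$-point sets $X$. Optimal $k$-means centers of $S'$ with weights $w$ minimize $\sum_{q\in S'}w(q)\min_{x\in X'}\|q-x\|^2$. For scalars, $x\approx_c y$ means $\frac1c x\le y\le cx$. $X$ is an $\alpha$-approximation for $k$-means of $P$ if $\mathrm{cost}(P,X)\le\alpha\,\mathrm{cost}(P,X^* )$ with $X^*$ optimal. A JL projection is a random linear map $\pi:\mathbb{R}^d\to\mathbb{R}^{d'}$ from a family such that for every $\epsilon,\delta\in(0,1/2)$ there is $d'=O(\epsilon^{-2}\log(1/\delta))$ with $\Pr\{\|\pi(x)\|\approx_{1+\epsilon}\|x\|\}\ge1-\delta$ for every $x$, and which is sub-Gaussian-tailed. FSS (Feldman–Schmidt–Sohler) applied to $P$: it projects onto the span of the top $O(k/\epsilon^2)$ right singular vectors of the data matrix and applies sensitivity sampling; its output has $|S|=O(k^3\log^2k\,\epsilon^{-4}\log(1/\delta))$, is an $\epsilon$-coreset with probability $\ge1-\delta$,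 and is computed in time $O(\min(nd^2,n^2d)+nk\epsilon^{-2}(d+k\log(1/\delta)))$. Communication cost is the number of scalars the data source sends; complexity is the number of elementary operations at the data source; $\tilde{O}$ hides polylogarithmic factors. *)

(* Defs.v *)
From HB Require Import structures.
From mathcomp Require Import all_boot all_order all_algebra.
From mathcomp Require Import all_classical all_reals all_analysis.
Set Implicit Arguments. Unset Strict Implicit. Unset Printing Implicit Defensive.
Import Order.TTheory GRing.Theory Num.Theory.
Local Open Scope ring_scope.

Section KMeans.
Variable R : realType.

Definition sqdist (d : nat) (u v : 'rV[R]_d) : R :=
  \sum_(i < d) (u ord0 i - v ord0 i) ^+ 2.

(* min_{x in X} ||p - x||^2  (X is always nonempty where used) *)
Definition dist2set (d : nat) (p : 'rV[R]_d) (X : seq 'rV[R]_d) : R :=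
  \big[Num.min/sqdist p (head p X)]_(x <- X) sqdist p x.

Definition cost (d : nat) (P X : seq 'rV[R]_d) : R :=
  \sum_(p <- P) dist2set p X.

Definition wcost (d : nat) (S : seq 'rV[R]_d) (w : 'rV[R]_d -> R)
    (X : seq 'rV[R]_d) : R :=
  \sum_(q <- S) w q * dist2set q X.

Definition coreset_cost (d : nat) (S : seq 'rV[R]_d) (Delta : R)
    (w : 'rV[R]_d -> R) (X : seq 'rV[R]_d) : R :=
  wcost S w X + Delta.

Definition jl_apply (d d' : nat) (Pi : 'M[R]_(d, d')) (v : 'rV[R]_d) : 'rV[R]_d' :=
  v *m Pi.

Definition proj_wcost (d d' : nat) (Pi : 'M[R]_(d, d')) (S : seq 'rV[R]_d)
    (w : 'rV[R]_d -> R) (X' : seq 'rV[R]_d') : R :=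
  \sum_(q <- S) w q * dist2set (jl_apply Pi q) X'.

Definition proj_coreset_cost (d d' : nat) (Pi : 'M[R]_(d, d'))
    (S : seq 'rV[R]_d) (Delta : R) (w : 'rV[R]_d -> R) (Y : seq 'rV[R]_d) : R :=
  proj_wcost Pi S w (map (jl_apply Pi) Y) + Delta.

Definition is_coreset (d k : nat) (eps : R) (P S : seq 'rV[R]_d) (Delta : R)
    (w : 'rV[R]_d -> R) : Prop :=
  forall X : seq 'rV[R]_d, size X = k ->
    (1 - eps) * cost P X <= coreset_cost S Delta w X /\
    coreset_cost S Delta w X <= (1 + eps) * cost P X.

Definition approx_c (c x y : R) : Prop := x / c <= y /\ y <= c * x.

Definition optimal_kmeans (d k : nat) (P Xs : seq 'rV[R]_d) : Prop :=
  size Xs = k /\ forall Y : seq 'rV[R]_d, size Y = k -> cost P Xs <= cost P Y.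

Definition optimal_proj_kmeans (d d' k : nat) (Pi : 'M[R]_(d, d'))
    (S : seq 'rV[R]_d) (w : 'rV[R]_d -> R) (X' : seq 'rV[R]_d') : Prop :=
  size X' = k /\ forall Y' : seq 'rV[R]_d', size Y' = k ->
    proj_wcost Pi S w X' <= proj_wcost Pi S w Y'.

(* logarithm as used inside O-notation: max(1, ln x) *)
Definition lg (x : R) : R := Num.max 1 (ln x).

(* scalars sent by the data source: |S| d' entries of S', |S| weights, Delta *)
Definition comm_cost (s d' : nat) : R := (s * d' + s + 1)%:R.

(* operations at the data source: FSS (Tfss), drawing the d x d' JL matrix,
   and computing S' = S * Pi  (|S| x d times d x d', naive: 2 |S| d d') *)
Definition source_cost (Tfss : R) (d d' s : nat) : R :=
  Tfss + (d * d')%:R + (2 * s * d * d')%:R.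

End KMeans.

(* Main.v *)
Require Import Defs.
From HB Require Import structures.
From mathcomp Require Import all_boot all_order all_algebra.
From mathcomp Require Import all_classical all_reals all_analysis.
From mathcomp Require Import lra ring.
Import Order.TTheory GRing.Theory Num.Theory.
Local Open Scope classical_set_scope.
Local Open Scope ring_scope.


Section Helpers.
Variable R : realType.
Implicit Types x y : R.

Lemma lg_ge1 x : 1 <= lg x.
Proof. by rewrite /lg le_max lexx. Qed.

Lemma lg_ge0 x : 0 <= lg x.
Proof. exact: le_trans ler01 (lg_ge1 x). Qed.

Lemma ln_le_lg x : ln x <= lg x.
Proof. by rewrite /lg le_max lexx orbT. Qed.

Lemma lg_mono x y : 0 < y -> x <= y -> lg x <= lg y.
Proof.
move=> y0 xy; rewrite /lg ge_max le_max lexx /=.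
case: (leP x 0) => x0.
  by rewrite le_max (le_trans (ln_le0 (le_trans x0 ler01))) ?ler01.
by rewrite le_max ler_ln ?xy ?orbT // posrE.
Qed.

Lemma lg_le_id x : 1 <= x -> lg x <= x.
Proof.
move=> x1; rewrite /lg ge_max x1 /=.
apply: ltW; apply: ln_sublinear; exact: lt_le_trans ltr01 x1.
Qed.

Lemma lg_lin c x n : 0 <= c -> 1 <= x ->
  lg ((c + 1) * x ^+ n) <= (1 + ln (c + 1) + n%:R) * lg x.
Proof.
move=> c0 x1.
have x0 : 0 < x by exact: lt_le_trans ltr01 x1.
have c1 : 0 < c + 1 by lra.
have L1 := lg_ge1 x.
have lc0 : 0 <= ln (c + 1) by apply: ln_ge0; lra.
rewrite /lg ge_max; apply/andP; split.
  rewrite -/(lg x); have : 1 <= 1 + ln (c + 1) + n%:R.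
    have := ler0n R n; lra.
  move=> h; rewrite -[1 in X in X <= _]mulr1; apply: ler_pM => //.
rewrite lnM ?posrE ?exprn_gt0 // lnXn // -/(lg x).
have hl := ln_le_lg x.
rewrite !mulrDl mul1r -mulr_natl.
have : ln (c + 1) <= ln (c + 1) * lg x.
  by rewrite -[X in X <= _]mulr1 ler_wpM2l.
have : n%:R * ln x <= n%:R * lg x by rewrite ler_wpM2l.
have := ler0n R n.
lra.
Qed.


Lemma pow_mono n x y : 0 <= x -> x <= y -> x ^+ n <= y ^+ n.
Proof. by move=> x0 xy; apply: lerXn2r; rewrite ?nnegrE // (le_trans x0 xy). Qed.

Lemma max0_bound c x y : 0 <= x -> y <= c * x -> y <= Num.max c 0 * x.
Proof.
move=> x0 h; apply: (le_trans h); apply: ler_wpM2r => //.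
by rewrite le_max lexx.
Qed.

Lemma max0_ge0 c : 0 <= Num.max c 0 :> R.
Proof. by rewrite le_max lexx orbT. Qed.

Variables (k : nat) (eps delta : R).
Hypotheses (k0 : (0 < k)%N) (e0 : 0 < eps) (e1 : eps < 1) (d0 : 0 < delta) (d1 : delta < 1).

Let a := eps^-1.
Let b := delta^-1.
Let kk : R := k%:R.
Let z := kk / (eps * delta).
Let L := lg z.

Lemma a_ge1 : 1 <= a.
Proof. by rewrite /a invf_ge1 // ltW. Qed.
Lemma b_ge1 : 1 <= b.
Proof. by rewrite /b invf_ge1 // ltW. Qed.
Lemma kk_ge1 : 1 <= kk.
Proof. by rewrite /kk ler1n. Qed.
Lemma zE : z = kk * a * b.
Proof. by rewrite /z invfM mulrA. Qed.
Lemma ab_ge1 : 1 <= a * b.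
Proof. have := a_ge1; have := b_ge1; nra. Qed.
Lemma ka_ge1 : 1 <= kk * a.
Proof. have := a_ge1; have := kk_ge1; nra. Qed.
Lemma kb_ge1 : 1 <= kk * b.
Proof. have := b_ge1; have := kk_ge1; nra. Qed.
Lemma kk_le_z : kk <= z.
Proof.
rewrite zE -mulrA; have := kk_ge1; have := ab_ge1; nra.
Qed.
Lemma a_le_z : a <= z.
Proof.
rewrite zE (mulrC kk) -mulrA; have := a_ge1; have := kb_ge1; nra.
Qed.
Lemma b_le_z : b <= z.
Proof.
rewrite zE; have := b_ge1; have := ka_ge1; nra.
Qed.
Lemma z_ge1 : 1 <= z.
Proof. exact: le_trans kk_ge1 kk_le_z. Qed.
Lemma L_ge1 : 1 <= L.
Proof. exact: lg_ge1. Qed.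
Lemma L_le_z : L <= z.
Proof. exact: lg_le_id z_ge1. Qed.
Lemma lgk_le : lg kk <= L.
Proof. apply: lg_mono kk_le_z; exact: lt_le_trans ltr01 z_ge1. Qed.
Lemma lgb_le : lg b <= L.
Proof. apply: lg_mono b_le_z; exact: lt_le_trans ltr01 z_ge1. Qed.

Lemma sbound (C1 : R) (s : nat) :
  s%:R <= C1 * kk ^+ 3 * lg kk ^+ 2 * eps ^- 4 * lg b ->
  s%:R <= Num.max C1 0 * (kk ^+ 3 * a ^+ 4 * L ^+ 3).
Proof.
move=> hs.
have ha := a_ge1; have hk := kk_ge1; have hL := L_ge1.
have hT : s%:R <= Num.max C1 0 * (kk ^+ 3 * lg kk ^+ 2 * a ^+ 4 * lg b).
  apply: max0_bound.
    apply: mulr_ge0; last exact: lg_ge0.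
    apply: mulr_ge0; last by apply: exprn_ge0; lra.
    apply: mulr_ge0; [apply: exprn_ge0; lra| apply: exprn_ge0; exact: lg_ge0].
  by move: hs; rewrite /a exprVn !mulrA.
apply: (le_trans hT); apply: ler_wpM2l; first exact: max0_ge0.
have -> : kk ^+ 3 * a ^+ 4 * L ^+ 3 = kk ^+ 3 * L ^+ 2 * a ^+ 4 * L.
  by ring.
apply: ler_pM.
- apply: mulr_ge0; last by apply: exprn_ge0; lra.
  apply: mulr_ge0; [apply: exprn_ge0; lra| apply: exprn_ge0; exact: lg_ge0].
- exact: lg_ge0.
- apply: ler_wpM2r; first by apply: exprn_ge0; lra.
  apply: ler_wpM2l; first by apply: exprn_ge0; lra.
  apply: pow_mono; [exact: lg_ge0 | exact: lgk_le].
- exact: lgb_le.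
Qed.


Definition KK (C1 : R) : R := 1 + ln (Num.max C1 0 + 1) + 12%:R.

Lemma KK_ge1 C1 : 1 <= KK C1.
Proof.
rewrite /KK; have : 0 <= ln (Num.max C1 0 + 1).
  apply: ln_ge0; have := max0_ge0 C1; lra.
have := ler0n R 12; lra.
Qed.

Lemma z10 : kk ^+ 3 * a ^+ 4 * L ^+ 3 <= z ^+ 10.
Proof.
have hk := kk_ge1; have ha := a_ge1; have hL := L_ge1.
have -> : z ^+ 10 = z ^+ 3 * z ^+ 4 * z ^+ 3 by rewrite -!exprD.
apply: ler_pM; [|by apply: exprn_ge0; lra| |].
- apply: mulr_ge0; apply: exprn_ge0; lra.
- apply: ler_pM; [apply: exprn_ge0; lra|apply: exprn_ge0; lra| |].
  + apply: pow_mono; [lra|exact: kk_le_z].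
  + apply: pow_mono; [lra|exact: a_le_z].
- apply: pow_mono; [lra|exact: L_le_z].
Qed.

Lemma dbound (C1 C2 : R) (s d' : nat) :
  s%:R <= C1 * kk ^+ 3 * lg kk ^+ 2 * eps ^- 4 * lg b ->
  d'%:R <= C2 * eps ^- 2 * lg (s%:R * kk / delta) ->
  d'%:R <= Num.max C2 0 * (a ^+ 2 * (KK C1 * L)).
Proof.
move=> hs hd.
have hs' := @sbound C1 s hs.
set c := Num.max C1 0.
have c0 : 0 <= c by exact: max0_ge0.
have hz := z_ge1.
have hX : 0 <= kk ^+ 3 * a ^+ 4 * L ^+ 3.
  have hk := kk_ge1; have ha := a_ge1; have hL := L_ge1.
  apply: mulr_ge0; [apply: mulr_ge0|]; apply: exprn_ge0; lra.
have hy : s%:R * kk / delta <= (c + 1) * z ^+ 12.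
  have h1 : s%:R <= (c + 1) * z ^+ 10.
    apply: (le_trans hs'); apply: ler_pM; [exact: c0|exact: hX| |exact: z10]. rewrite lerDl; exact: ler01.
  have -> : (c + 1) * z ^+ 12 = (c + 1) * z ^+ 10 * z * z.
    by ring.
  rewrite -/b; apply: ler_pM.
  - apply: mulr_ge0; [exact: ler0n| have := kk_ge1; lra].
  - have := b_ge1; lra.
  - apply: ler_pM; [exact: ler0n| have := kk_ge1; lra|exact: h1|exact: kk_le_z].
  - exact: b_le_z.
have hlg : lg (s%:R * kk / delta) <= KK C1 * L.
  apply: le_trans (@lg_lin c z 12 c0 hz).
  apply: lg_mono hy; apply: mulr_gt0; first lra.
  apply: exprn_gt0; lra.
have hd' : d'%:R <= Num.max C2 0 * (a ^+ 2 * lg (s%:R * kk / delta)).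
  apply: max0_bound.
    apply: mulr_ge0; [apply: exprn_ge0; have := a_ge1; lra|exact: lg_ge0].
  by move: hd; rewrite /a exprVn mulrA.
apply: (le_trans hd'); apply: ler_wpM2l; first exact: max0_ge0.
apply: ler_wpM2l => //; apply: exprn_ge0; have := a_ge1; lra.
Qed.


Lemma G_ge1 : 1 <= kk ^+ 3 * a ^+ 6 * L ^+ 4.
Proof.
have hk := kk_ge1; have ha := a_ge1; have hL := L_ge1.
rewrite -[1]mulr1 -[1 * 1]mulr1; apply: ler_pM; [lra|lra| |exact: exprn_ege1].
apply: ler_pM; [lra|lra|exact: exprn_ege1|exact: exprn_ege1].
Qed.

Lemma part2_core (C1 C2 : R) (s d' : nat) :
  s%:R <= C1 * kk ^+ 3 * lg kk ^+ 2 * eps ^- 4 * lg b ->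
  d'%:R <= C2 * eps ^- 2 * lg (s%:R * kk / delta) ->
  comm_cost R s d' <= (Num.max C1 0 * Num.max C2 0 * KK C1 + Num.max C1 0 + 1)
     * kk ^+ 3 / eps ^+ 6 * L ^+ 4.
Proof.
move=> hs hd.
have hs' := @sbound C1 s hs.
have hd' := @dbound C1 C2 s d' hs hd.
set c1 := Num.max C1 0 in hs' hd' *.
set c2 := Num.max C2 0 in hd' *.
set K := KK C1 in hd' *.
have hk := kk_ge1; have ha := a_ge1; have hL := L_ge1.
have c10 : 0 <= c1 by exact: max0_ge0.
have c20 : 0 <= c2 by exact: max0_ge0.
have K0 : 0 <= K by have := KK_ge1 C1; rewrite -/K; lra.
set G := kk ^+ 3 * a ^+ 6 * L ^+ 4.
have hG := G_ge1; rewrite -/G in hG.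
have -> : (c1 * c2 * K + c1 + 1) * kk ^+ 3 / eps ^+ 6 * L ^+ 4 = (c1 * c2 * K + c1 + 1) * G.
  by rewrite /G /a exprVn; ring.
have hX : 0 <= kk ^+ 3 * a ^+ 4 * L ^+ 3.
  apply: mulr_ge0; [apply: mulr_ge0|]; apply: exprn_ge0; lra.
have h1 : s%:R * d'%:R <= c1 * c2 * K * G.
  apply: le_trans (ler_pM (ler0n _ _) (ler0n _ _) hs' hd') _.
  rewrite le_eqVlt; apply/orP; left; apply/eqP; rewrite /G; ring.
have h2 : s%:R <= c1 * G.
  apply: (le_trans hs'); apply: ler_wpM2l => //.
  rewrite /G; apply: ler_pM; [|apply: exprn_ge0; lra| |].
  - apply: mulr_ge0; apply: exprn_ge0; lra.
  - apply: ler_wpM2l; first by apply: exprn_ge0; lra.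
    by apply: ler_weXn2l.
  - by apply: ler_weXn2l.
rewrite /comm_cost !natrD natrM.
have : c1 * c2 * K * G + c1 * G + G = (c1 * c2 * K + c1 + 1) * G by ring.
lra.
Qed.


Lemma sd_bound (C1 C2 : R) (s d' : nat) :
  s%:R <= C1 * kk ^+ 3 * lg kk ^+ 2 * eps ^- 4 * lg b ->
  d'%:R <= C2 * eps ^- 2 * lg (s%:R * kk / delta) ->
  s%:R * d'%:R <= Num.max C1 0 * Num.max C2 0 * KK C1 * z ^+ 13.
Proof.
move=> hs hd.
have hs' := @sbound C1 s hs.
have hd' := @dbound C1 C2 s d' hs hd.
set c1 := Num.max C1 0 in hs' hd' *.
set c2 := Num.max C2 0 in hd' *.
set K := KK C1 in hd' *.
have hk := kk_ge1; have ha := a_ge1; have hL := L_ge1.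
have c10 : 0 <= c1 by exact: max0_ge0.
have c20 : 0 <= c2 by exact: max0_ge0.
have K0 : 0 <= K by have := KK_ge1 C1; rewrite -/K; lra.
apply: le_trans (ler_pM (ler0n _ _) (ler0n _ _) hs' hd') _.
have -> : c1 * (kk ^+ 3 * a ^+ 4 * L ^+ 3) * (c2 * (a ^+ 2 * (K * L)))
   = c1 * c2 * K * (kk ^+ 3 * a ^+ 6 * L ^+ 4) by ring.
apply: ler_wpM2l; first by apply: mulr_ge0 => //; apply: mulr_ge0.
have -> : z ^+ 13 = z ^+ 3 * z ^+ 6 * z ^+ 4 by rewrite -!exprD.
have hz := z_ge1.
apply: ler_pM; [| apply: exprn_ge0; lra | |].
- apply: mulr_ge0; apply: exprn_ge0; lra.
- apply: ler_pM; [apply: exprn_ge0; lra|apply: exprn_ge0; lra| |].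
  + apply: pow_mono; [lra|exact: kk_le_z].
  + apply: pow_mono; [lra|exact: a_le_z].
- apply: pow_mono; [lra|exact: L_le_z].
Qed.

Lemma zpow_le j : (j <= 13)%N -> z ^+ j <= z ^+ 13.
Proof. by move=> hj; apply: ler_weXn2l => //; exact: z_ge1. Qed.

Lemma part3_core (C1 C2 C3 : R) (n d s d' : nat) (Tfss : R) :
  z ^+ 13 <= (minn n d)%:R ->
  s%:R <= C1 * kk ^+ 3 * lg kk ^+ 2 * eps ^- 4 * lg b ->
  d'%:R <= C2 * eps ^- 2 * lg (s%:R * kk / delta) ->
  Tfss <= C3 * ((minn (n * d ^ 2) (n ^ 2 * d))%:R
                 + n%:R * kk * eps ^- 2 * (d%:R + kk * lg b)) ->
  source_cost Tfss d d' s <=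
   (3 * Num.max C3 0 + Num.max C2 0 * KK C1 + 2 * (Num.max C1 0 * Num.max C2 0 * KK C1))
     * (n * d * minn n d)%:R.
Proof.
move=> hM hs hd hT.
have hsd := @sd_bound C1 C2 s d' hs hd.
have hd' := @dbound C1 C2 s d' hs hd.
set c1 := Num.max C1 0 in hsd hd' *.
set c2 := Num.max C2 0 in hd' hsd *.
set c3 := Num.max C3 0.
set K := KK C1 in hd' hsd *.
have hk := kk_ge1; have ha := a_ge1; have hL := L_ge1; have hb := b_ge1.
have hz := z_ge1.
have c10 : 0 <= c1 by exact: max0_ge0.
have c20 : 0 <= c2 by exact: max0_ge0.
have c30 : 0 <= c3 by exact: max0_ge0.
have K0 : 0 <= K by have := KK_ge1 C1; rewrite -/K; lra.
set N : R := n%:R. set D : R := d%:R. set M : R := (minn n d)%:R.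
have hM1 : 1 <= M.
  apply: le_trans hM; exact: exprn_ege1.
have MN : M <= N by rewrite /M /N ler_nat geq_minl.
have MD : M <= D by rewrite /M /D ler_nat geq_minr.
have N1 : 1 <= N by lra.
have D1 : 1 <= D by lra.
have eNDM : (n * d * minn n d)%:R = N * D * M by rewrite !natrM.
have emin : (minn (n * d ^ 2) (n ^ 2 * d))%:R = N * D * M.
  rewrite -eNDM; congr (_%:R).
  by rewrite minnMr minnC; congr minn; rewrite !expnS !expn0 !muln1; ring.
have hzM j : (j <= 13)%N -> z ^+ j <= M.
  by move=> hj; exact: le_trans (@zpow_le j hj) hM.
rewrite eNDM /source_cost.
have hX1 : N * kk * eps ^- 2 * D <= N * D * M.
  have : kk * a ^+ 2 <= M.
    apply: le_trans (hzM 3%N isT); rewrite [z ^+ 3]exprS.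
    apply: ler_pM; [lra|apply: exprn_ge0; lra|exact: kk_le_z|].
    apply: pow_mono; [lra|exact: a_le_z].
  rewrite /a exprVn => h.
  have -> : N * kk * eps ^- 2 * D = N * D * (kk * eps ^- 2) by ring.
  apply: ler_wpM2l => //; apply: mulr_ge0; lra.
have hX2 : N * kk * eps ^- 2 * (kk * lg b) <= N * D * M.
  have : kk * a ^+ 2 * (kk * lg b) <= M.
    apply: le_trans (hzM 5%N isT).
    have -> : z ^+ 5 = z * z ^+ 2 * (z * z) by rewrite -exprS -expr2 -exprD.
    apply: ler_pM.
    - apply: mulr_ge0; [lra|apply: exprn_ge0; lra].
    - apply: mulr_ge0; [lra|exact: lg_ge0].
    - apply: ler_pM; [lra|apply: exprn_ge0; lra|exact: kk_le_z|].
      apply: pow_mono; [lra|exact: a_le_z].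
    - apply: ler_pM; [lra|exact: lg_ge0|exact: kk_le_z|].
      exact: le_trans (lgb_le) L_le_z.
  rewrite /a exprVn => h.
  have -> : N * kk * eps ^- 2 * (kk * lg b) = N * (kk * eps ^- 2 * (kk * lg b)) by ring.
  have -> : N * D * M = N * (D * M) by ring.
  apply: ler_wpM2l; first lra.
  apply: (le_trans h); rewrite -[X in X <= _]mul1r; apply: ler_wpM2r; lra.
have hX0 : 0 <= (minn (n * d ^ 2) (n ^ 2 * d))%:R
                 + N * kk * eps ^- 2 * (D + kk * lg b).
  apply: addr_ge0; first exact: ler0n.
  apply: mulr_ge0; last by apply: addr_ge0; [lra|apply: mulr_ge0; [lra|exact: lg_ge0]].
  apply: mulr_ge0; [apply: mulr_ge0; lra|].
  rewrite -exprVn; apply: exprn_ge0; rewrite invr_ge0; exact: ltW.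
have hT' := @max0_bound C3 _ _ hX0 hT; rewrite -/c3 in hT'.
have hT3 : Tfss <= c3 * (3 * (N * D * M)).
  apply: (le_trans hT'); apply: ler_wpM2l => //.
  rewrite emin mulrDr.
  have : 0 <= N * D * M by apply: mulr_ge0; [apply: mulr_ge0|]; lra.
  lra.
have hDd : (d * d')%:R <= c2 * K * (N * D * M).
  rewrite natrM -/D.
  have h3 : a ^+ 2 * (K * L) <= K * M.
    have -> : a ^+ 2 * (K * L) = K * (a ^+ 2 * L) by ring.
    apply: ler_wpM2l => //; apply: le_trans (hzM 3%N isT).
    rewrite [z ^+ 3]exprSr; apply: ler_pM; [apply: exprn_ge0; lra|lra| |exact: L_le_z].
    apply: pow_mono; [lra|exact: a_le_z].
  have : d'%:R <= c2 * (K * M).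
    apply: (le_trans hd'); apply: ler_wpM2l => //.
  move=> h.
  have -> : c2 * K * (N * D * M) = D * (N * (c2 * (K * M))) by ring.
  apply: ler_wpM2l; first lra.
  apply: (le_trans h); rewrite -[X in X <= _]mul1r; apply: ler_wpM2r => //.
  by apply: mulr_ge0 => //; apply: mulr_ge0; lra.
have hSd : (2 * s * d * d')%:R <= 2 * (c1 * c2 * K) * (N * D * M).
  rewrite !natrM -/D.
  have -> : 2%:R * s%:R * D * d'%:R = 2 * D * (s%:R * d'%:R) by ring.
  have -> : 2 * (c1 * c2 * K) * (N * D * M) = 2 * D * (N * (c1 * c2 * K * M)) by ring.
  apply: ler_wpM2l; first lra.
  apply: (le_trans hsd).
  have h0 : 0 <= c1 * c2 * K by apply: mulr_ge0 => //; apply: mulr_ge0.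
  apply: le_trans (_ : c1 * c2 * K * M <= _).
    by apply: ler_wpM2l => //; exact: hM.
  rewrite -[X in X <= _]mul1r; apply: ler_wpM2r => //.
  by apply: mulr_ge0 => //; lra.
have : (3 * c3 + c2 * K + 2 * (c1 * c2 * K)) * (N * D * M)
     = c3 * (3 * (N * D * M)) + c2 * K * (N * D * M) + 2 * (c1 * c2 * K) * (N * D * M) by ring.
lra.
Qed.

End Helpers.
Lemma part1 (R : realType) :
  (forall (d d' k : nat) (eps delta : R) (P Xstar : seq 'rV[R]_d)
     (dT : measure_display) (Omega : measurableType dT)
     (Pr : probability Omega R)
     (S : Omega -> seq 'rV[R]_d) (Delta : Omega -> R)
     (w : Omega -> 'rV[R]_d -> R) (Pi : Omega -> 'M[R]_(d, d'))
     (X' : Omega -> seq 'rV[R]_d') (X : Omega -> seq 'rV[R]_d),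
   0 < eps < 1 -> 0 < delta < 1 -> (0 < k)%N -> uniq P ->
   optimal_kmeans k P Xstar ->
   (forall om, optimal_proj_kmeans k (Pi om) (S om) (w om) (X' om)) ->
   (forall om, map (jl_apply (Pi om)) (X om) = X' om) ->
   measurable [set om | is_coreset k eps P (S om) (Delta om) (w om)] ->
   measurable [set om |
     approx_c ((1 + eps) ^+ 2) (coreset_cost (S om) (Delta om) (w om) (X om))
       (proj_coreset_cost (Pi om) (S om) (Delta om) (w om) (X om)) /\
     approx_c ((1 + eps) ^+ 2) (coreset_cost (S om) (Delta om) (w om) Xstar)
       (proj_coreset_cost (Pi om) (S om) (Delta om) (w om) Xstar)] ->
   ((1 - delta)%:E <= Pr [set om | is_coreset k eps P (S om) (Delta om) (w om)])%E ->
   ((1 - delta)%:E * Pr [set om | is_coreset k eps P (S om) (Delta om) (w om)]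
      <= Pr ([set om | is_coreset k eps P (S om) (Delta om) (w om)] `&`
             [set om |
     approx_c ((1 + eps) ^+ 2) (coreset_cost (S om) (Delta om) (w om) (X om))
       (proj_coreset_cost (Pi om) (S om) (Delta om) (w om) (X om)) /\
     approx_c ((1 + eps) ^+ 2) (coreset_cost (S om) (Delta om) (w om) Xstar)
       (proj_coreset_cost (Pi om) (S om) (Delta om) (w om) Xstar)]))%E ->
   exists A : set Omega, measurable A /\
     A `<=` [set om | cost P (X om) <= (1 + eps) ^+ 5 / (1 - eps) * cost P Xstar] /\
     (((1 - delta) ^+ 2)%:E <= Pr A)%E).
Proof.
move=> d d' k eps delta P Xstar dT Omega Pr S Delta w Pi X' X.
move=> /andP[e0 e1] /andP[d0 d1] k0 uP [sXs optXs] optX' hmap mE mF hE hEF.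
eexists; split; first exact: measurableI mE mF.
split.
  move=> om /= [hC [[hX1 _] [_ hXs2]]].
  have c0 : 0 < (1 + eps) ^+ 2 by apply: exprn_gt0; lra.
  have sX : size (X om) = k by rewrite -(size_map (jl_apply (Pi om))) hmap; case: (optX' om).
  have [hC1 _] := hC _ sX.
  have [_ hC2] := hC _ sXs.
  move: hX1; rewrite ler_pdivrMr // => hX1.
  have hP : proj_coreset_cost (Pi om) (S om) (Delta om) (w om) (X om)
         <= proj_coreset_cost (Pi om) (S om) (Delta om) (w om) Xstar.
    rewrite /proj_coreset_cost lerD2r hmap.
    case: (optX' om) => _; apply; by rewrite size_map.
  rewrite mulrAC ler_pdivlMr; last lra.
  rewrite mulrC.
  apply: (le_trans hC1); apply: (le_trans hX1).
  have -> : (1 + eps) ^+ 5 * cost P Xstar = (1 + eps) ^+ 2 * ((1 + eps) ^+ 2 * ((1 + eps) * cost P Xstar)) by ring.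
  rewrite mulrC; apply: ler_wpM2l; first exact: ltW.
  apply: (le_trans hP); apply: (le_trans hXs2).
  apply: ler_wpM2l; first exact: ltW.
  exact: hC2.
apply: le_trans hEF.
rewrite expr2 EFinM; apply: lee_wpmul2l => //.
rewrite lee_fin; lra.
Qed.

Theorem theorem5 (R : realType) :
  (* (1) approximation guarantee *)
  (forall (d d' k : nat) (eps delta : R) (P Xstar : seq 'rV[R]_d)
     (dT : measure_display) (Omega : measurableType dT)
     (Pr : probability Omega R)
     (S : Omega -> seq 'rV[R]_d) (Delta : Omega -> R)
     (w : Omega -> 'rV[R]_d -> R) (Pi : Omega -> 'M[R]_(d, d'))
     (X' : Omega -> seq 'rV[R]_d') (X : Omega -> seq 'rV[R]_d),
   0 < eps < 1 -> 0 < delta < 1 -> (0 < k)%N -> uniq P ->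
   optimal_kmeans k P Xstar ->
   (forall om, optimal_proj_kmeans k (Pi om) (S om) (w om) (X' om)) ->
   (forall om, map (jl_apply (Pi om)) (X om) = X' om) ->
   measurable [set om | is_coreset k eps P (S om) (Delta om) (w om)] ->
   measurable [set om |
     approx_c ((1 + eps) ^+ 2) (coreset_cost (S om) (Delta om) (w om) (X om))
       (proj_coreset_cost (Pi om) (S om) (Delta om) (w om) (X om)) /\
     approx_c ((1 + eps) ^+ 2) (coreset_cost (S om) (Delta om) (w om) Xstar)
       (proj_coreset_cost (Pi om) (S om) (Delta om) (w om) Xstar)] ->
   ((1 - delta)%:E <= Pr [set om | is_coreset k eps P (S om) (Delta om) (w om)])%E ->
   ((1 - delta)%:E * Pr [set om | is_coreset k eps P (S om) (Delta om) (w om)]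
      <= Pr ([set om | is_coreset k eps P (S om) (Delta om) (w om)] `&`
             [set om |
     approx_c ((1 + eps) ^+ 2) (coreset_cost (S om) (Delta om) (w om) (X om))
       (proj_coreset_cost (Pi om) (S om) (Delta om) (w om) (X om)) /\
     approx_c ((1 + eps) ^+ 2) (coreset_cost (S om) (Delta om) (w om) Xstar)
       (proj_coreset_cost (Pi om) (S om) (Delta om) (w om) Xstar)]))%E ->
   exists A : set Omega, measurable A /\
     A `<=` [set om | cost P (X om) <= (1 + eps) ^+ 5 / (1 - eps) * cost P Xstar] /\
     (((1 - delta) ^+ 2)%:E <= Pr A)%E)
  /\
  (* (2) communication cost is O~(k^3 / eps^6) *)
  (forall C1 C2 : R, exists C : R, exists c : nat,
   forall (k s d' : nat) (eps delta : R),
   0 < eps < 1 -> 0 < delta < 1 -> (0 < k)%N ->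
   s%:R <= C1 * k%:R ^+ 3 * lg k%:R ^+ 2 * eps ^- 4 * lg delta^-1 ->
   d'%:R <= C2 * eps ^- 2 * lg (s%:R * k%:R / delta) ->
   comm_cost R s d' <= C * k%:R ^+ 3 / eps ^+ 6 * lg (k%:R / (eps * delta)) ^+ c)
  /\
  (* (3) data-source complexity is O(n d min(n,d)) when min(n,d) >> k, 1/eps, 1/delta *)
  (forall C1 C2 C3 : R, exists C : R, exists c : nat,
   forall (n d k s d' : nat) (eps delta Tfss : R),
   0 < eps < 1 -> 0 < delta < 1 -> (0 < k)%N ->
   (k%:R / (eps * delta)) ^+ c <= (minn n d)%:R ->
   s%:R <= C1 * k%:R ^+ 3 * lg k%:R ^+ 2 * eps ^- 4 * lg delta^-1 ->
   d'%:R <= C2 * eps ^- 2 * lg (s%:R * k%:R / delta) ->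
   Tfss <= C3 * ((minn (n * d ^ 2) (n ^ 2 * d))%:R
                 + n%:R * k%:R * eps ^- 2 * (d%:R + k%:R * lg delta^-1)) ->
   source_cost Tfss d d' s <= C * (n * d * minn n d)%:R).
Proof.
split; first exact: part1.
split.
  move=> C1 C2.
  exists (Num.max C1 0 * Num.max C2 0 * @KK R C1 + Num.max C1 0 + 1), 4%N.
  move=> k s d' eps delta /andP[e0 e1] /andP[d0 d1] k0 hs hd.
  exact: (@part2_core R k eps delta k0 e0 e1 d0 d1 C1 C2 s d' hs hd).
move=> C1 C2 C3.
exists (3 * Num.max C3 0 + Num.max C2 0 * @KK R C1 + 2 * (Num.max C1 0 * Num.max C2 0 * @KK R C1)), 13%N.
move=> n d k s d' eps delta Tfss /andP[e0 e1] /andP[d0 d1] k0 hM hs hd hT.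
exact: (@part3_core R k eps delta k0 e0 e1 d0 d1 C1 C2 C3 n d s d' Tfss hM hs hd hT).
Qed.
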